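(* Let $X$ be a topological quandle and let $\{X_\alpha\}$ be the decomposition of $X$ into its path components. Then $H_n(X)\cong\bigoplus_\alpha H_n(X_\alpha)$ for every $n$, where $H_n(X_\alpha)$ is the homology of the subcomplex of $C_*(X)$ spanned by singular simplices with image in $X_\alpha$.
   Context: A quandle is a set with a binary operation $\triangleright$ such that $x\triangleright x=x$, each $\beta_y(x)=x\triangleright y$ is bijective, and $(x\triangleright y)\triangleright z=(x\triangleright z)\triangleright(y\triangleright z)$. A topological quandle is a topological space with a continuous quandle operation such that every $\beta_y$ is a homeomorphism. Let $\Delta^n$ have vertices $e_0,\dots,e_n$ ($\Delta^{n-1}$ has vertices $\bar e_0,\dots,\bar e_{n-1}$). For a singular $n$-simplex $\sigma:\Delta^n\to X$ write $\sigma=\sigma_{[x_1,\dots,x_{n+1}]}$ with $x_i=\sigma(e_{i-1})$; singular simplices are combined pointwise by $(\sigma\triangleright\tau)(t)=\sigma(t)\triangleright\tau(t)$. $C_n(X)$ is the free abelian group on singular $n$-simplices. For $2\le i\le n+1$, $d_i\sigma$ is $\sigma$ restricted to the face omitting $e_{i-1}$ (via $\bar e_j\mapsto e_j$ for $j\le i-2$, $\bar e_j\mapsto e_{j+1}$ for $j\ge i-1$), and $s_i\sigma=\sigma\circ\iota_i$ with $\iota_i(\sum t_j\bar e_j)=(\sum_{k=0}^{i-2}t_k)e_{i-1}+\sum_{j=i-1}^{n-1}t_je_{j+1}$. The boundary is $\partial_n\sigma=\sum_{i=2}^{n+1}(-1)^i(d_i\sigma-d_i\sigma\triangleright s_i\sigma)$,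 extended linearly ($\partial_0=0$); $H_n(X)$ is the $n$-th homology of $(C_*(X),\partial)$. *)

(* Defs.v *)
From HB Require Import structures.
From mathcomp Require Import all_boot all_order all_algebra.
From mathcomp Require Import all_classical all_reals all_analysis.
From mathcomp Require Import Rstruct Rstruct_topology.
From mathcomp.multinomials Require Import freeg.

Set Implicit Arguments.
Unset Strict Implicit.
Unset Printing Implicit Defensive.

Import Order.TTheory GRing.Theory Num.Theory.
Local Open Scope classical_set_scope.
Local Open Scope ring_scope.

Notation RR := Rdefinitions.R.

Definition homeomorphism {S T : topologicalType} (f : S -> T) : Prop :=
  exists g : T -> S, [/\ cancel f g, cancel g f, continuous f & continuous g].

Definition quandle_axioms {X : Type} (op : X -> X -> X) : Prop :=
  [/\ forall x, op x x = x,
      forall y, bijective (fun x => op x y) &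
      forall x y z, op (op x y) z = op (op x z) (op y z)].

Definition topological_quandle (X : topologicalType) (op : X -> X -> X) : Prop :=
  [/\ quandle_axioms op,
      continuous (fun p : X * X => op p.1 p.2) &
      forall y, homeomorphism (fun x => op x y)].

Definition stdsimplex (n : nat) : set 'rV[RR]_n.+1 :=
  [set t | (forall i, 0 <= t ord0 i) /\ \sum_i t ord0 i = 1].

Arguments stdsimplex n : clear implicits.

Definition vtx (n : nat) (j : 'I_n.+1) : 'rV[RR]_n.+1 := \row_k (k == j)%:R.

(* A singular n-simplex sigma : Delta^n -> X is represented by its canonical
   extension to the whole of 'rV_n.+1, constant equal to sigma(e_0) outside
   Delta^n; this makes singular simplices <-> continuous maps Delta^n -> X a
   bijection. *)
Definition is_singular (X : topologicalType) (n : nat) (f : 'rV[RR]_n.+1 -> X)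
  : Prop :=
  {within stdsimplex n, continuous f} /\
  (forall t, ~ stdsimplex n t -> f t = f (vtx ord0)).

Definition normalize (X : Type) (n : nat) (f : 'rV[RR]_n.+1 -> X)
  : 'rV[RR]_n.+1 -> X :=
  fun t => if `[< stdsimplex n t >] then f t else f (vtx ord0).

Arguments normalize X n f : clear implicits.

(* face map Delta^n -> Delta^(n+1) omitting the vertex e_m
   (bar e_j |-> e_j for j < m, bar e_j |-> e_(j+1) for j >= m) *)
Definition face_map (n : nat) (m : 'I_n.+2) (t : 'rV[RR]_n.+1) : 'rV[RR]_n.+2 :=
  \row_k (match unlift m k with Some j => t ord0 j | None => 0 end).

(* the map iota: sum_j t_j bar e_j |->
   (sum_(j < m) t_j) e_m + sum_(j >= m) t_j e_(j+1) *)
Definition degen_map (n : nat) (m : 'I_n.+2) (t : 'rV[RR]_n.+1) : 'rV[RR]_n.+2 :=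
  \row_k (match unlift m k with
          | None => \sum_(j < n.+1 | (j < m)%N) t ord0 j
          | Some j => if (k < m)%N then 0 else t ord0 j
          end).

(* With i = m + 1 (2 <= i <= n+2):  d_i sigma and s_i sigma *)
Definition dface (X : Type) (n : nat) (m : 'I_n.+2) (s : 'rV[RR]_n.+2 -> X)
  : 'rV[RR]_n.+1 -> X := normalize X n (s \o face_map m).

Definition sdegen (X : Type) (n : nat) (m : 'I_n.+2) (s : 'rV[RR]_n.+2 -> X)
  : 'rV[RR]_n.+1 -> X := normalize X n (s \o degen_map m).

Definition sop (X : Type) (op : X -> X -> X) (n : nat) (s t : 'rV[RR]_n.+1 -> X)
  : 'rV[RR]_n.+1 -> X := fun u => op (s u) (t u).

(* C_n(X) is the subgroup of chains supported on singular simplices.   *)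

Definition chain (X : topologicalType) (n : nat) :=
  {freeg ('rV[RR]_n.+1 -> X) / int}.

(* boundary of a generator sigma of degree n+1 :
   sum_(i=2)^(n+2) (-1)^i (d_i sigma - d_i sigma |> s_i sigma) *)
Definition bd_gen (X : topologicalType) (op : X -> X -> X) (n : nat)
  (s : 'rV[RR]_n.+2 -> X) : chain X n :=
  \sum_(m < n.+2 | (0 < m)%N)
     ((-1) ^+ m.+1 : int) *: (<< dface m s >> - << sop op (dface m s) (sdegen m s) >>).

Definition bd (X : topologicalType) (op : X -> X -> X) (n : nat)
  : chain X n.+1 -> chain X n := fglift (@bd_gen X op n).

Definition simplex_in (X : topologicalType) (A : set X) (n : nat)
  (s : 'rV[RR]_n.+1 -> X) : Prop :=
  is_singular s /\ s @` stdsimplex n `<=` A.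

Definition chains_in (X : topologicalType) (A : set X) (n : nat) : set (chain X n) :=
  [set c | forall s, s \in dom c -> simplex_in A s].

Arguments chains_in X A n : clear implicits.

Definition is_cycle (X : topologicalType) (op : X -> X -> X) (n : nat)
  : chain X n -> Prop :=
  match n with
  | 0 => fun _ => True                      (* partial_0 = 0 *)
  | n'.+1 => fun c => bd op c = 0
  end.

Definition cycles (X : topologicalType) (op : X -> X -> X) (A : set X) (n : nat)
  : set (chain X n) := [set c | chains_in X A n c /\ is_cycle op c].

Arguments cycles X op A n : clear implicits.

Definition boundaries (X : topologicalType) (op : X -> X -> X) (A : set X)
  (n : nat) : set (chain X n) := [set bd op c | c in chains_in X A n.+1].

Arguments boundaries X op A n : clear implicits.

Definition coset {G : zmodType} (B : set G) (z : G) : set G := [set z + b | b in B].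

(* Z / B, as the set of cosets z + B, z in Z; the group law is setadd and
   the neutral element is B *)
Definition subquot {G : zmodType} (Z B : set G) : set (set G) :=
  [set S | exists2 z, Z z & S = coset B z].

Definition setadd {G : zmodType} (S T : set G) : set G :=
  [set s + t | s in S & t in T].

(* H_n of the subcomplex spanned by simplices with image in A
   (A = setT gives H_n(X)) *)
Definition homology (X : topologicalType) (op : X -> X -> X) (A : set X) (n : nat)
  : set (set (chain X n)) := subquot (cycles X op A n) (boundaries X op A n).

Arguments homology X op A n : clear implicits.

Definition dsum {I : Type} {G : Type} (H : I -> set G) (zero : I -> G) : set (I -> G) :=
  [set h | (forall i, H i (h i)) /\ finite_set [set i | h i <> zero i]].

Definition group_iso {A B : Type} (PA : set A) (addA : A -> A -> A)
  (PB : set B) (addB : B -> B -> B) : Prop :=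
  exists f : A -> B,
    [/\ forall a, PA a -> PB (f a),
        forall a a', PA a -> PA a' -> f (addA a a') = addB (f a) (f a'),
        forall a a', PA a -> PA a' -> f a = f a' -> a = a' &
        forall b, PB b -> exists2 a, PA a & f a = b].

Definition path_rel (X : topologicalType) (x y : X) : Prop :=
  exists g : RR -> X,
    [/\ {within `[(0 : RR), 1], continuous g}, g 0 = x & g 1 = y].

Definition path_component (X : topologicalType) (x : X) : set X :=
  [set y | path_rel x y].

Definition path_components (X : topologicalType) : Type :=
  {A : set X | exists x, A = path_component x}.

(* Main.v *)
Set Warnings "-notation-overridden,-notation-incompatible-prefix,-ambiguous-paths,-deprecated".
Require Import Defs.
From HB Require Import structures.
From mathcomp Require Import all_boot all_order all_algebra.
From mathcomp Require Import all_classical all_reals all_analysis.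
From mathcomp Require Import Rstruct Rstruct_topology.
From mathcomp.multinomials Require Import freeg.
Local Open Scope classical_set_scope.

Set Implicit Arguments.
Unset Strict Implicit.
Unset Printing Implicit Defensive.
Import Order.TTheory GRing.Theory Num.Theory.

Lemma within_comp (T U V : topologicalType) (A : set T) (B : set U)
  (f : T -> U) (g : U -> V) :
  {within A, continuous f} -> (forall x, A x -> B (f x)) ->
  {within B, continuous g} -> {within A, continuous (g \o f)}.
Proof.
move=> /subspace_continuousP hf AB /subspace_continuousP hg.
apply/subspace_continuousP => x Ax W /= /(hg _ (AB _ Ax)) /= hW.
have := hf _ Ax _ hW.
rewrite !nbhs_simpl /= /within /=.
apply: filterS => t Ht At; exact: Ht At (AB _ At).
Qed.
From mathcomp Require Import ring lra.
Local Open Scope ring_scope.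

Lemma affine_cont (a b : RR) : continuous (fun t : RR => a * t + b).
Proof.
move=> x.
have h0 : {for x, continuous (@id RR)} by exact: cvg_id.
have h2 : {for x, continuous (fun=> a : RR)} by exact: cst_continuous.
have h3 : {for x, continuous (fun=> b : RR)} by exact: cst_continuous.
have h1 := continuousM h2 h0.
have := @continuousD RR RR^o _ _ _ x h1 h3.
exact.
Qed.

Lemma in01 (t : RR) : (`[(0:RR), 1]%classic t) <-> 0 <= t <= 1.
Proof. by rewrite /= in_itv /=. Qed.

Lemma path_refl (X : topologicalType) (x : X) : path_rel x x.
Proof. by exists (fun=> x); split => //; apply: continuous_subspaceT; exact: cst_continuous. Qed.

Lemma path_sym (X : topologicalType) (x y : X) : path_rel x y -> path_rel y x.
Proof.
case=> g [cg g0 g1]; exists (g \o (fun t => -1 * t + 1)); split.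
- apply: within_comp cg.
  + by apply: continuous_subspaceT; exact: affine_cont.
  + by move=> t /in01 ht; apply/in01; lra.
- by rewrite /= mulr0 add0r.
- by rewrite /= mulN1r addNr.
Qed.
Lemma itv_memP (a b t : RR) : (`[a, b]%classic t) <-> a <= t <= b.
Proof. by rewrite /= in_itv /=. Qed.

Lemma path_trans (X : topologicalType) (x y z : X) :
  path_rel x y -> path_rel y z -> path_rel x z.
Proof.
case=> g [cg g0 g1]; case=> h [ch h0 h1].
pose k t := if t <= 2^-1 then g (2 * t + 0) else h (2 * t + -1).
exists k; split; first last.
- rewrite /k ifF; last by apply/negbTE; rewrite -ltNge; lra.
  by have -> : 2 * 1 + -1 = 1 :> RR by lra.
- by rewrite /k ifT ?mulr0 ?addr0 //; lra.
have -> : (`[(0:RR), 1] = `[0, 2^-1] `|` `[2^-1, 1])%classic.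
  apply/seteqP; split => t /=.
    move/itv_memP => ht; case: (leP t (2^-1)) => ht2; [left|right]; apply/itv_memP; lra.
  by case => /itv_memP ht; apply/itv_memP; lra.
apply: withinU_continuous; [exact: interval_closed | exact: interval_closed | |].
- have c1 : {within `[(0:RR), 2^-1]%classic, continuous (g \o (fun t => 2 * t + 0))}.
    apply: within_comp cg; first by apply: continuous_subspaceT; exact: affine_cont.
    by move=> t /itv_memP ht; apply/itv_memP; lra.
  apply: subspace_eq_continuous c1 => t /set_mem /itv_memP ht.
  by rewrite /from_subspace /= /k ifT //; lra.
- have c1 : {within `[(2^-1:RR), 1]%classic, continuous (h \o (fun t => 2 * t + -1))}.
    apply: within_comp ch; first by apply: continuous_subspaceT; exact: affine_cont.
    by move=> t /itv_memP ht; apply/itv_memP; lra.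
  apply: subspace_eq_continuous c1 => u /set_mem /itv_memP hu.
  rewrite /from_subspace /k /=; case: ifP => // hu2.
  have -> : u = 2^-1 by lra.
  have -> : 2 * 2^-1 + -1 = 0 :> RR by lra.
  have -> : 2 * 2^-1 + 0 = 1 :> RR by lra.
  by rewrite h0 g1.
Qed.
Lemma path_comp_eq (X : topologicalType) (x y : X) :
  path_rel x y -> path_component x = path_component y.
Proof.
move=> hxy; apply/seteqP; split => z /=.
  by move=> hxz; apply: path_trans (path_sym hxy) hxz.
by move=> hyz; apply: path_trans hxy hyz.
Qed.

Lemma vtx_simplex n (j : 'I_n.+1) : stdsimplex n (vtx j).
Proof.
split=> [i|]; first by rewrite /vtx mxE ler0n.
rewrite (bigD1 j) //= big1 => [|i /negbTE hij]; rewrite /vtx mxE ?eqxx ?addr0 //.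
by rewrite hij.
Qed.

Lemma seg_cont n (p q : 'rV[RR]_n.+1) :
  continuous (fun t : RR => t *: (q - p) + p).
Proof.
move=> x.
have h0 : {for x, continuous (@id RR)} by exact: cvg_id.
have h1 := @continuousZr_tmp _ _ _ _ (q - p) _ h0.
have h2 : {for x, continuous (fun=> p)} by exact: cst_continuous.
have := continuousD h1 h2.
exact.
Qed.

Lemma seg_simplex n (p q : 'rV[RR]_n.+1) (t : RR) :
  stdsimplex n p -> stdsimplex n q -> 0 <= t <= 1 ->
  stdsimplex n (t *: (q - p) + p).
Proof.
move=> [p0 p1] [q0 q1] ht; split.
  move=> i; rewrite !mxE.
  have := p0 i; have := q0 i; nra.
rewrite (eq_bigr (fun i => t * q ord0 i + (1 - t) * p ord0 i)); last first.
  by move=> i _; rewrite !mxE; ring.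
by rewrite big_split /= -!mulr_sumr p1 q1; ring.
Qed.

Lemma singular_path (X : topologicalType) n (f : 'rV[RR]_n.+1 -> X) p :
  is_singular f -> stdsimplex n p -> path_rel (f (vtx ord0)) (f p).
Proof.
move=> [cf _] hp.
exists (f \o (fun t : RR => t *: (p - vtx ord0) + vtx ord0)); split.
- apply: within_comp cf; first by apply: continuous_subspaceT; exact: seg_cont.
  by move=> t /in01 ht; apply: seg_simplex => //; exact: vtx_simplex.
- by rewrite /= scale0r add0r.
- by rewrite /= scale1r subrK.
Qed.

Lemma path_op (X : topologicalType) (op : X -> X -> X) (x y : X) :
  topological_quandle op -> path_rel x y -> path_rel x (op x y).
Proof.
case=> [[idem _ _] cop _] [g [cg g0 g1]].
exists ((fun p : X * X => op p.1 p.2) \o (fun t => (x, g t))); split.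
- apply: (@within_comp _ _ _ _ setT (fun t => (x, g t)) (fun p : X * X => op p.1 p.2)) => //.
    2: exact: continuous_subspaceT.
  apply/subspace_continuousP => t At.
  apply: cvg_pair; first exact: cvg_cst.
  by move/subspace_continuousP : cg => /(_ t At).
- by rewrite /= g0 idem.
- by rewrite /= g1.
Qed.
From mathcomp Require Import zify.
Lemma face_vtx0 n (m : 'I_n.+2) : m != ord0 ->
  face_map m (vtx (ord0 : 'I_n.+1)) = vtx ord0.
Proof.
move=> hm; apply/rowP => k; rewrite !mxE.
case: unliftP => [j ->|->]; last by rewrite (negbTE hm).
rewrite /vtx mxE.
suff -> : (fintype.lift m j == ord0) = (j == ord0) by [].
have hm' : (0 < m)%N by rewrite lt0n.
rewrite -!val_eqE /= /bump; case: j => [[|jj] Hj] /=; first by rewrite leqNgt hm'.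
by case: leqP.
Qed.

Lemma degen_vtx0 n (m : 'I_n.+2) : m != ord0 ->
  degen_map m (vtx (ord0 : 'I_n.+1)) = vtx m.
Proof.
move=> hm; apply/rowP => k; rewrite !mxE.
have hm' : (0 < m)%N by rewrite lt0n.
case: unliftP => [j ->|->].
  rewrite eq_sym (negbTE (neq_lift _ _)).
  case: ifP => // hlt; rewrite mxE; case: eqP => // hj0; exfalso.
  move: hlt; rewrite hj0 /= /bump; case: leqP => /=; lia.
rewrite eqxx (bigD1 ord0) /=; last by [].
rewrite big1 ?addr0 ?mxE ?eqxx //.
by move=> i /andP [_ hi]; rewrite mxE (negbTE hi).
Qed.
Lemma sig_eq (T : Type) (P : T -> Prop) (a b : {x | P x}) :
  sval a = sval b -> a = b.
Proof.
case: a => x px; case: b => y py /= exy; subst y.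
by rewrite (Prop_irrelevance px py).
Qed.

Definition pc (X : topologicalType) (x : X) : path_components X :=
  exist _ (path_component x) (ex_intro _ x erefl).

Definition cl (X : topologicalType) n (s : 'rV[RR]_n.+1 -> X) : path_components X :=
  pc (s (vtx ord0)).

Lemma pc_eq (X : topologicalType) (x y : X) : path_rel x y -> pc x = pc y.
Proof. by move=> h; apply: sig_eq => /=; exact: path_comp_eq. Qed.

Lemma normalize_vtx0 (X : Type) n (f : 'rV[RR]_n.+1 -> X) :
  normalize X n f (vtx ord0) = f (vtx ord0).
Proof. by rewrite /normalize asboolT //; exact: vtx_simplex. Qed.

Lemma cl_dface (X : topologicalType) n (m : 'I_n.+2) (s : 'rV[RR]_n.+2 -> X) :
  m != ord0 -> cl (dface m s) = cl s.
Proof. by move=> hm; rewrite /cl /dface normalize_vtx0 /= face_vtx0. Qed.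

Lemma cl_sop (X : topologicalType) (op : X -> X -> X) n (m : 'I_n.+2)
  (s : 'rV[RR]_n.+2 -> X) :
  topological_quandle op -> is_singular s -> m != ord0 ->
  cl (sop op (dface m s) (sdegen m s)) = cl s.
Proof.
move=> hq hs hm; rewrite /cl /sop /dface /sdegen !normalize_vtx0 /= face_vtx0 //.
rewrite degen_vtx0 //; apply/esym/pc_eq; apply: path_op => //.
apply: singular_path => //; exact: vtx_simplex.
Qed.

Lemma simplex_inP (X : topologicalType) n (a : path_components X)
  (s : 'rV[RR]_n.+1 -> X) :
  simplex_in (sval a) s <-> is_singular s /\ cl s = a.
Proof.
case: a => A [x hA] /=; split.
  case=> hs him; split => //.
  apply: sig_eq => /=; rewrite hA; apply/esym/path_comp_eq.
  have : A (s (vtx ord0)) by apply: him; exists (vtx ord0) => //; exact: vtx_simplex.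
  by rewrite hA.
case=> hs /(congr1 sval) /= <-; split => // y [p hp <-].
exact: singular_path.
Qed.

Lemma simplex_inT (X : topologicalType) n (s : 'rV[RR]_n.+1 -> X) :
  simplex_in setT s <-> is_singular s.
Proof. by split => [[]//|hs]; split. Qed.
Local Open Scope ring_scope.

Section Proj.
Variable X : topologicalType.

Definition Pj n (a : path_components X) (c : chain X n) : chain X n :=
  fgmap (fun s : 'rV[RR]_n.+1 -> X => `[< cl s = a >]) id c.

Lemma coeffP n a (c : chain X n) s :
  coeff s (Pj a c) = if `[< cl s = a >] then coeff s c else 0.
Proof.
rewrite fgmap_f0_coeffE; last done.
by case: ifP => _; rewrite ?mulr1n ?mulr0n.
Qed.

Lemma PjB n a (c d : chain X n) : Pj a (c - d) = Pj a c - Pj a d.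
Proof. by apply/eqP/freeg_eqP => s; rewrite !(coeffP, coeffB); case: ifP; rewrite ?subr0. Qed.

Lemma Pj0 n a : Pj a (0 : chain X n) = 0.
Proof. by apply/eqP/freeg_eqP => s; rewrite coeffP !coeff0; case: ifP. Qed.

Lemma PjN n a (c : chain X n) : Pj a (- c) = - Pj a c.
Proof. by apply/eqP/freeg_eqP => s; rewrite !(coeffP, coeffN); case: ifP; rewrite ?oppr0. Qed.

Lemma PjD n a (c d : chain X n) : Pj a (c + d) = Pj a c + Pj a d.
Proof. by apply/eqP/freeg_eqP => s; rewrite !(coeffP, coeffD); case: ifP; rewrite ?addr0. Qed.

Lemma PjZ n a k (c : chain X n) : Pj a (k *: c) = k *: Pj a c.
Proof. by apply/eqP/freeg_eqP => s; rewrite !(coeffP, coeffZ); case: ifP; rewrite ?mulr0. Qed.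

Lemma Pj_sum n a (I : Type) (r : seq I) (P : pred I) (F : I -> chain X n) :
  Pj a (\sum_(i <- r | P i) F i) = \sum_(i <- r | P i) Pj a (F i).
Proof. exact: (big_morph _ (PjD a) (Pj0 n a)). Qed.

Lemma PjU n a k (s : 'rV[RR]_n.+1 -> X) :
  Pj a << k *g s >> = if `[< cl s = a >] then << k *g s >> else 0.
Proof.
apply/eqP/freeg_eqP => t; rewrite coeffP coeffU.
case: (eqVneq s t) => [<-|hst]; first by case: ifP; rewrite ?coeff0 ?coeffU ?eqxx.
by rewrite mulr0; case: ifP => _; case: ifP => _; rewrite ?coeff0 ?coeffU ?(negbTE hst) ?mulr0.
Qed.

Lemma PjPj n a b (c : chain X n) :
  Pj a (Pj b c) = if `[< a = b >] then Pj b c else 0.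
Proof.
case: (asboolP (a = b)) => [->|hab]; apply/eqP/freeg_eqP => s; rewrite !coeffP.
  by case: (asboolP (cl s = b)).
have -> : coeff s (0 : chain X n) = 0 by exact: coeff0.
case: (asboolP (cl s = a)) => [hs|//].
case: (asboolP (cl s = b)) => // hsb.
by exfalso; apply: hab; rewrite -hs hsb.
Qed.

End Proj.
Section Chains.
Variables (X : topologicalType) (op : X -> X -> X).
Hypothesis hq : topological_quandle op.

Lemma bdB n (c d : chain X n.+1) : bd op (c - d) = bd op c - bd op d.
Proof. exact: lift_is_additive. Qed.

Lemma bd0 n : bd op (0 : chain X n.+1) = 0.
Proof. rewrite -[Y in bd op Y](subrr (0 : chain X n.+1)) bdB subrr; exact: erefl. Qed.

Lemma bdN n (c : chain X n.+1) : bd op (- c) = - bd op c.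
Proof. have := bdB 0 c; rewrite sub0r => ->; rewrite bd0 sub0r; exact: erefl. Qed.

Lemma bdD n (c d : chain X n.+1) : bd op (c + d) = bd op c + bd op d.
Proof. have := bdB c (- d); rewrite opprK => ->; rewrite bdN opprK; exact: erefl. Qed.

Lemma bd_sum n (I : Type) (r : seq I) (P : pred I) (F : I -> chain X n.+1) :
  bd op (\sum_(i <- r | P i) F i) = \sum_(i <- r | P i) bd op (F i).
Proof. exact: (big_morph _ (@bdD n) (bd0 n)). Qed.

Lemma bdU n k (s : 'rV[RR]_n.+2 -> X) : bd op << k *g s >> = k *: bd_gen op s.
Proof. exact: liftU. Qed.

Lemma chains0 A n : chains_in X A n 0.
Proof. by move=> s; rewrite dom0. Qed.

Lemma chainsB A n (c d : chain X n) :
  chains_in X A n c -> chains_in X A n d -> chains_in X A n (c - d).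
Proof. by move=> hc hd s /domB; rewrite mem_cat => /orP [/hc|/hd]. Qed.

Lemma chainsD A n (c d : chain X n) :
  chains_in X A n c -> chains_in X A n d -> chains_in X A n (c + d).
Proof. by move=> hc hd s /domD_subset; rewrite mem_cat => /orP [/hc|/hd]. Qed.

Lemma chains_sum A n (I : Type) (r : seq I) (P : pred I) (F : I -> chain X n) :
  (forall i, P i -> chains_in X A n (F i)) ->
  chains_in X A n (\sum_(i <- r | P i) F i).
Proof.
move=> h; apply: (big_ind (chains_in X A n)) => //; [exact: chains0 | exact: chainsD].
Qed.

Lemma chainsT n (a : path_components X) (c : chain X n) :
  chains_in X (sval a) n c -> chains_in X setT n c.
Proof. by move=> h s /h [hs _]; split. Qed.

Lemma chains_Pj n a (c : chain X n) :
  chains_in X setT n c -> chains_in X (sval a) n (Pj a c).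
Proof.
move=> h s; rewrite mem_dom coeffP; case: (asboolP (cl s = a)) => [hs|]; last by rewrite eqxx.
rewrite -mem_dom => /h /simplex_inT hsing; exact/simplex_inP.
Qed.

Lemma chains_inP n a (c : chain X n) :
  chains_in X (sval a) n c <-> chains_in X setT n c /\ Pj a c = c.
Proof.
split.
  move=> h; split; first exact: chainsT h.
  apply/eqP/freeg_eqP => s; rewrite coeffP; case: (asboolP (cl s = a)) => // hs.
  case: (boolP (s \in dom c)) => [/h /simplex_inP [] //|/coeff_outdom -> //].
case=> h <-; exact: chains_Pj.
Qed.

Lemma Pj_bdgen n a (s : 'rV[RR]_n.+2 -> X) : is_singular s ->
  Pj a (bd_gen op s) = if `[< cl s = a >] then bd_gen op s else 0.
Proof.
move=> hs; rewrite /bd_gen Pj_sum.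
have E : forall m : 'I_n.+2, (0 < m)%N ->
  Pj a (((-1) ^+ m.+1 : int) *: (<< dface m s >> - << sop op (dface m s) (sdegen m s) >>))
  = if `[< cl s = a >] then ((-1) ^+ m.+1 : int) *: (<< dface m s >> - << sop op (dface m s) (sdegen m s) >>) else 0.
  move=> m hm; have hm' : m != ord0 by rewrite -lt0n.
  rewrite PjZ PjB !PjU cl_dface // cl_sop //.
  by case: ifP => _ //; rewrite subr0 scaler0.
rewrite (eq_bigr _ E); case: ifP => // _.
by rewrite big1.
Qed.

Lemma Pj_bd n a (c : chain X n.+1) :
  chains_in X setT n.+1 c -> Pj a (bd op c) = bd op (Pj a c).
Proof.
move=> h; rewrite -(freeg_sumE c) bd_sum.
have := Pj_sum a (dom c) xpredT (fun i => bd op << coeff i c *g i >>).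
move=> ->.
have := Pj_sum a (dom c) xpredT (fun i => << coeff i c *g i >>).
move=> ->.
have := bd_sum (dom c) xpredT (fun i => Pj a << coeff i c *g i >>).
move=> ->.
apply: eq_big_seq => s /h /simplex_inT hs.
rewrite bdU PjZ Pj_bdgen // PjU.
case: ifP => _; first by rewrite bdU.
rewrite bd0 scaler0; exact: erefl.
Qed.

End Chains.
Section Cosets.
Variable G : zmodType.
Implicit Types B : set G.

Definition subgrp B := B 0 /\ forall x y, B x -> B y -> B (x - y).

Lemma sg_opp B x : subgrp B -> B x -> B (- x).
Proof. by case=> h0 hB bx; rewrite -sub0r; apply: hB. Qed.

Lemma sg_add B x y : subgrp B -> B x -> B y -> B (x + y).
Proof. by move=> hs bx yb; rewrite -(opprK y); apply: hs.2 => //; exact: sg_opp. Qed.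

Lemma coset_mem B z y : subgrp B -> coset B z y <-> B (y - z).
Proof.
move=> hs; split => [[b bb <-]|h]; first by rewrite addrC addKr.
by exists (y - z) => //; rewrite addrC subrK.
Qed.

Lemma coset0 B : subgrp B -> coset B 0 = B.
Proof. by move=> hs; apply/seteqP; split => y; rewrite /= coset_mem // subr0. Qed.

Lemma coset_eq B x y : subgrp B -> B (x - y) -> coset B x = coset B y.
Proof.
move=> hs hxy; apply/seteqP; split => t; rewrite /= !coset_mem // => h.
  by have := sg_add hs h hxy; rewrite addrA subrK.
have := hs.2 _ _ h hxy; congr B; rewrite opprB addrA subrK; exact: erefl.
Qed.

Lemma coset_eqP B x y : subgrp B -> coset B x = coset B y -> B (x - y).
Proof.
move=> hs hxy; have : coset B y x by rewrite -hxy coset_mem // subrr; exact: hs.1.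
by rewrite coset_mem.
Qed.

Lemma setadd_coset B x y : subgrp B ->
  setadd (coset B x) (coset B y) = coset B (x + y).
Proof.
move=> hs; apply/seteqP; split => t /=.
  case=> u /coset_mem -/(_ hs) hu [v /coset_mem -/(_ hs) hv <-].
  apply/coset_mem => //; have := sg_add hs hu hv; congr B.
  by rewrite opprD addrACA; exact: erefl.
move/coset_mem => -/(_ hs) ht; exists x; first by apply/coset_mem; rewrite // subrr; exact: hs.1.
exists (t - x); last by rewrite addrC subrK.
by apply/coset_mem => //; rewrite -addrA -opprD.
Qed.

End Cosets.
HB.instance Definition _ (X : topologicalType) := gen_eqMixin (path_components X).
HB.instance Definition _ (X : topologicalType) := gen_choiceMixin (path_components X).

Section Main.
Variables (X : topologicalType) (op : X -> X -> X).
Hypothesis hq : topological_quandle op.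

Lemma bnd_sg A n : subgrp (boundaries X op A n).
Proof.
split; first by exists 0; [exact: chains0 | exact: bd0].
move=> _ _ [c hc <-] [d hd <-]; exists (c - d); first exact: chainsB.
exact: bdB.
Qed.

Lemma bndT n (a : path_components X) (c : chain X n) : boundaries X op (sval a) n c -> boundaries X op setT n c.
Proof. by case=> d hd <-; exists d => //; exact: chainsT hd. Qed.

Lemma bnd_sum n (I : Type) (r : seq I) (P : pred I) (F : I -> chain X n) :
  (forall i, P i -> boundaries X op setT n (F i)) ->
  boundaries X op setT n (\sum_(i <- r | P i) F i).
Proof.
move=> h; apply: (big_ind (boundaries X op setT n)) => //.
  exact: (bnd_sg setT n).1.
by move=> x y hx hy; apply: sg_add => //; exact: bnd_sg.
Qed.

Lemma Pj_decomp n (c : chain X n) :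
  c = \sum_(a <- undup (map (@cl X n) (dom c))) Pj a c.
Proof.
apply/eqP/freeg_eqP => s.
have := big_morph (coeff s) (@coeffD _ _ s) (@coeff0 _ _ s).
move=> ->.
case: (boolP (s \in dom c)) => hs.
  rewrite (bigD1_seq (cl s)) ?undup_uniq ?mem_undup ?map_f //=.
  rewrite coeffP asboolT // big1 ?addr0 // => b hb.
  by rewrite coeffP asboolF //; apply/eqP; rewrite eq_sym.
rewrite coeff_outdom // big1 // => b _.
by rewrite coeffP coeff_outdom //; case: ifP.
Qed.

Lemma bnd_decomp n (c : chain X n) :
  boundaries X op setT n c <-> forall a, boundaries X op (sval a) n (Pj a c).
Proof.
split.
  case=> d hd <- a; exists (Pj a d); first exact: chains_Pj.
  by rewrite Pj_bd.
move=> h; rewrite (Pj_decomp c); apply: bnd_sum => a _; exact: bndT (h a).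
Qed.


Lemma cyc_Pj n a (c : chain X n) :
  cycles X op setT n c -> cycles X op (sval a) n (Pj a c).
Proof.
case=> hc hcy; split; first exact: chains_Pj.
case: n c hc hcy => [|n] c hc hcy //=.
rewrite -Pj_bd // /=; move: hcy => /= ->; exact: Pj0.
Qed.

Lemma cycT n (a : path_components X) (c : chain X n) :
  cycles X op (sval a) n c -> cycles X op setT n c.
Proof. by case=> hc hcy; split => //; exact: chainsT hc. Qed.

Lemma cyc_self n a (c : chain X n) : cycles X op (sval a) n c -> Pj a c = c.
Proof. by case=> /chains_inP []. Qed.

Lemma cyc0 n : cycles X op setT n 0.
Proof. split; first exact: chains0. by case: n => //= n; exact: bd0. Qed.

Lemma cycD n (c d : chain X n) :
  cycles X op setT n c -> cycles X op setT n d -> cycles X op setT n (c + d).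
Proof.
case=> hc hcy [hd hdy]; split; first exact: chainsD.
case: n c d hc hcy hd hdy => [|n] c d hc hcy hd hdy //=.
by rewrite bdD; move: hcy hdy => /= -> ->; rewrite addr0.
Qed.

Definition Fm n (h : path_components X -> set (chain X n)) : set (chain X n) :=
  [set y | forall a, h a (Pj a y)].

Lemma Fm_coset n h (z : chain X n) :
  (forall a, h a = coset (boundaries X op (sval a) n) (Pj a z)) ->
  Fm h = coset (boundaries X op setT n) z.
Proof.
move=> hz; apply/seteqP; split=> y /=.
  move=> hy; apply/coset_mem; first exact: bnd_sg.
  apply/bnd_decomp => a; have := hy a; rewrite hz => /coset_mem -/(_ (bnd_sg _ _)).
  by rewrite PjB.
move/coset_mem => -/(_ (bnd_sg _ _)) /bnd_decomp hb a; rewrite hz.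
apply/coset_mem; first exact: bnd_sg.
rewrite -PjB; exact: hb.
Qed.

End Main.
Section Final.
Variables (X : topologicalType) (op : X -> X -> X).
Hypothesis hq : topological_quandle op.

Lemma Rep n h :
  dsum (fun a : path_components X => homology X op (sval a) n)
       (fun a => boundaries X op (sval a) n) h ->
  exists z, cycles X op setT n z /\
    forall a, h a = coset (boundaries X op (sval a) n) (Pj a z).
Proof.
case=> hh /finite_seqP [s hs].
have [r hr] : {r : path_components X -> chain X n & forall a,
    cycles X op (sval a) n (r a) /\ h a = coset (boundaries X op (sval a) n) (r a)}.
  apply: (@choice _ _ (fun a z => cycles X op (sval a) n z /\ h a = coset (boundaries X op (sval a) n) z)) => a; case: (hh a) => z hz ->; by exists z.
exists (\sum_(b <- undup s) r b); split.
  apply: (big_ind (cycles X op setT n)); [exact: cyc0 | exact: cycD | ].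
  by move=> b _; exact: cycT (hr b).1.
move=> a.
have := Pj_sum a (undup s) xpredT r; move=> ->.
have E : forall b, Pj a (r b) = if `[< a = b >] then r b else 0.
  move=> b; rewrite -{1}(cyc_self (hr b).1) PjPj.
  case: (asboolP (a = b)) => // _; exact: cyc_self (hr b).1.
case: (boolP (a \in s)) => ha.
  rewrite (bigD1_seq a) ?undup_uniq ?mem_undup //= E asboolT // big1 ?addr0.
    exact: (hr a).2.
  by move=> b hb; rewrite E asboolF //; move=> hab; move: hb; rewrite hab eqxx.
rewrite big1_seq; last first.
  move=> b /andP [_ hb]; rewrite E asboolF // => hab; move: ha; rewrite hab -mem_undup hb.
  done.
rewrite coset0; last exact: bnd_sg.
apply: contrapT => hne.
have : [set i | h i <> boundaries X op (sval i) n] a by [].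
by rewrite hs /= (negbTE ha).
Qed.

End Final.

Theorem mainTheorem6 (X : topologicalType) (op : X -> X -> X) :
  topological_quandle op ->
  forall n : nat,
    group_iso
      (dsum (fun a : path_components X => homology X op (sval a) n)
            (fun a => boundaries X op (sval a) n))
      (fun h k a => setadd (h a) (k a))
      (homology X op setT n) setadd.
Proof.
move=> hq n.
exists (@Fm X n); split.
- move=> h /Rep [z [hz hza]]; exists z => //; exact: Fm_coset.
- move=> h k /Rep [z [hz hza]] /Rep [w [hw hwa]].
  rewrite (Fm_coset hq hza) (Fm_coset hq hwa) setadd_coset; last exact: bnd_sg.
  apply: (Fm_coset hq) => a.
  by rewrite hza hwa setadd_coset ?PjD //; exact: bnd_sg.
- move=> h k /Rep [z [hz hza]] /Rep [w [hw hwa]].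
  rewrite (Fm_coset hq hza) (Fm_coset hq hwa) => /coset_eqP -/(_ (bnd_sg _ _ _)) /(bnd_decomp hq) hb.
  apply/funext => a; rewrite hza hwa; apply: coset_eq; first exact: bnd_sg.
  rewrite -PjB; exact: hb.
- move=> b [z hz ->].
  exists (fun a => coset (boundaries X op (sval a) n) (Pj a z)); last exact: Fm_coset.
  split; first by move=> a; exists (Pj a z) => //; exact: cyc_Pj.
  have fin : finite_set [set` map (@cl X n) (dom z)] by apply/finite_seqP; eexists.
  apply: sub_finite_set fin => a /= ha.
  apply/negPn/negP => hna; apply: ha.
  have -> : Pj a z = 0.
    apply/eqP/freeg_eqP => s; rewrite coeffP coeff0.
    case: (asboolP (cl s = a)) => // hs; rewrite coeff_outdom //.
    by apply: contra hna => hsd; rewrite -hs; exact: map_f.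
  exact/coset0/bnd_sg.
Qed.
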